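(* If a graph $G$ contains a perfect matching, then $L(G)\le \frac{3}{2}\,l(G)$.
   Context: Graphs are finite, undirected, without loops or multiple edges. $\nu(G)$ denotes the maximum size of a matching of $G$; a matching is maximum if it has $\nu(G)$ edges. For $F\subseteq E(G)$, $G\setminus F$ is the graph with vertex set $V(G)$ and edge set $E(G)\setminus F$. Define $L(G)=\max\{\nu(G\setminus F): F \text{ a maximum matching of } G\}$ and $l(G)=\min\{\nu(G\setminus F): F \text{ a maximum matching of } G\}$. *)

(* Defs.v *)
(* A finite simple graph on vertex type T : finType is given
   by its edge set E : {set {set T}}, every edge being a 2-element vertex set. *)
From mathcomp Require Import all_boot.
Set Implicit Arguments. Unset Strict Implicit. Unset Printing Implicit Defensive.

Section Matchings.
Variable T : finType.

Definition simple_graph (E : {set {set T}}) : bool :=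
  [forall e in E, #|e| == 2].

Definition is_matching (E M : {set {set T}}) : bool :=
  (M \subset E) &&
  [forall e in M, forall f in M, (e != f) ==> [disjoint e & f]].

Definition nu (E : {set {set T}}) : nat :=
  \max_(M : {set {set T}} | is_matching E M) #|M|.

Definition is_max_matching (E M : {set {set T}}) : bool :=
  is_matching E M && (#|M| == nu E).

Definition has_perfect_matching (E : {set {set T}}) : Prop :=
  exists M, is_matching E M /\ cover M = [set: T].

Definition Lmax (E : {set {set T}}) : nat :=
  \max_(F : {set {set T}} | is_max_matching E F) nu (E :\: F).

(* The minimum over the
   (always nonempty) set of maximum matchings is computed with initial value
   nu E, which is an upper bound of every nu (E :\: F). *)
Definition lmin (E : {set {set T}}) : nat :=
  \big[minn/nu E]_(F : {set {set T}} | is_max_matching E F) nu (E :\: F).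

End Matchings.

(* Main.v *)
Require Import Defs.
From mathcomp Require Import all_boot.
From Stdlib Require Import Lia.
Set Implicit Arguments. Unset Strict Implicit. Unset Printing Implicit Defensive.

Ltac nlia := try apply/leP; repeat match goal with H : is_true (_ <= _) |- _ => move/leP: H | H : @eq nat _ _ |- _ => move: H end;
  rewrite -?plusE -?multE -?minusE; intros; lia.

Section Key.
Variable T : finType.
Implicit Types (P Q R S N : {set {set T}}) (X : {set T}) (e f p : {set T}).

Definition mat N := forall e f (x : T), e \in N -> f \in N -> x \in e -> x \in f -> e = f.
Definition two N := forall e, e \in N -> #|e| = 2.
Definition meet X := [set e : {set T} | ~~ [disjoint e & X]].
Definition dd P Q := #|cover P :\: cover Q|.
Definition Zs P Q X := [set x | (x \notin X) && (x \in cover P) &&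
   [exists f in Q, (x \in f) && ~~ [disjoint f & X]]].
Definition Pat P (w : T) := [set e in P | w \in e].
Definition QP Q (y : T) := [set x | [exists f in Q, (x \in f) && (y \in f)] && (x != y)].
Definition goal P Q R := exists N, [/\ mat N, N \subset (P :|: Q) :\: R &
   2 * #|P| <= 3 * #|N| + dd P Q].

Lemma mat_sub N (M : {set {set T}}) : M \subset N -> mat N -> mat M.
Proof. move=> /subsetP sMN mN e f x eM fM; apply: mN; exact: sMN. Qed.

Lemma two_sub N (M : {set {set T}}) : M \subset N -> two N -> two M.
Proof. move=> /subsetP sMN tN e eM; apply: tN; exact: sMN. Qed.

Lemma coverP' P x : reflect (exists2 e, e \in P & x \in e) (x \in cover P).
Proof. rewrite /cover; apply: (iffP bigcupP) => [[e ? ?]|[e ? ?]]; by exists e. Qed.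

Lemma notdisj e X x : x \in e -> x \in X -> ~~ [disjoint e & X].
Proof. by move=> xe xX; apply/negP => /disjointFr /(_ xe); rewrite xX. Qed.

Lemma meetP e X : ~~ [disjoint e & X] -> exists2 x, x \in e & x \in X.
Proof.
rewrite -setI_eq0 => /set0Pn [x]; rewrite inE => /andP[]; by exists x.
Qed.

Lemma disjF e X x : [disjoint e & X] -> x \in e -> x \in X -> False.
Proof. by move=> d xe xX; move: (notdisj xe xX); rewrite d. Qed.

Lemma two_pair e y : #|e| = 2 -> y \in e -> exists z, z != y /\ e = [set y; z].
Proof.
move/eqP/cards2P => [a [b [ab ->]]]; rewrite !inE => /orP[]/eqP->.
  by exists b; rewrite eq_sym.
by exists a; split => //; rewrite setUC.
Qed.

Lemma two_elem e y x1 x2 : #|e| = 2 -> y \in e -> x1 \in e -> x2 \in e ->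
  x1 != y -> x2 != y -> x1 = x2.
Proof.
move=> e2 ye; have [z [zy ->]] := two_pair e2 ye.
rewrite !inE => /orP[]/eqP-> /orP[]/eqP-> //; rewrite ?eqxx //.
Qed.

Lemma Pat_le1 P w : mat P -> #|Pat P w| <= 1.
Proof.
move=> mP; apply/card_le1_eqP => e f; rewrite !inE => /andP[eP we] /andP[fP wf].
exact: (mP _ _ w).
Qed.

Lemma QPI Q f x y : f \in Q -> x \in f -> y \in f -> x != y -> x \in QP Q y.
Proof. move=> fQ xf yf xy; rewrite inE xy andbT; apply/existsP; exists f; by rewrite fQ xf yf. Qed.

Lemma QP_in Q f x y : mat Q -> x \in QP Q y -> f \in Q -> y \in f -> x \in f.
Proof.
move=> mQ; rewrite inE => /andP[/existsP[g /andP[gQ /andP[xg yg]]] _] fQ yf.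
by rewrite (mQ _ _ y fQ gQ yf yg).
Qed.

Lemma QP_le1 Q y : two Q -> mat Q -> #|QP Q y| <= 1.
Proof.
move=> tQ mQ; apply/card_le1_eqP => x1 x2 h1 h2.
move: (h1) (h2); rewrite !inE => /andP[/existsP[f /andP[fQ /andP[x1f yf]]] n1] /andP[_ n2].
have x2f := QP_in mQ h2 fQ yf.
exact: (two_elem (tQ _ fQ) yf).
Qed.

Lemma ZsP P Q X x : x \in Zs P Q X ->
  [/\ x \notin X, x \in cover P & exists f y, [/\ f \in Q, x \in f, y \in f & y \in X]].
Proof.
rewrite inE => /andP[/andP[xX xP] /existsP[f /andP[fQ /andP[xf /meetP[y yf yX]]]]].
by split => //; exists f, y.
Qed.

Lemma card3 (U : finType) (A B C : {set U}) : #|A :|: B :|: C| <= #|A| + #|B| + #|C|.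
Proof.
have h1 := (leq_card_setU (A :|: B) C).1; have h2 := (leq_card_setU A B).1. nlia.
Qed.

Lemma dbound P Q X : dd (P :\: meet X) (Q :\: meet X) + #|(cover P :\: cover Q) :&: X|
   <= dd P Q + #|Zs P Q X|.
Proof.
rewrite /dd; set A := cover P :\: cover Q.
have sub : cover (P :\: meet X) :\: cover (Q :\: meet X) \subset (A :\: X) :|: Zs P Q X.
  apply/subsetP => x; rewrite inE => /andP[xnQ' /coverP' [e]].
  rewrite !inE => /andP[eX eP] xe.
  have xX : x \notin X by apply/negP => xX; move: eX; rewrite (notdisj xe xX).
  have xP : x \in cover P by apply/coverP'; exists e.
  case: (boolP (x \in cover Q)) => xQ.
    apply/orP; right; rewrite xX xP /=.
    case/coverP': xQ => f fQ xf; apply/existsP; exists f; rewrite fQ xf /=.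
    apply/negP => fdX; move/negP: xnQ'; apply; apply/coverP'; exists f => //.
    by rewrite !inE fQ fdX.
  by rewrite xX xP.
have h1 := subset_leq_card sub.
have h2 := (leq_card_setU (A :\: X) (Zs P Q X)).1.
have h3 := cardsID X A.
nlia.
Qed.


Lemma arith1 (p p' m nn s d d' z a : nat) :
  2 * p' <= 3 * nn + d' -> m + p' = p -> d' + a <= d + z -> 2 * m + z <= 3 * s + a ->
  2 * p <= 3 * (nn + s) + d.
Proof. move=> h1 h2 h3 h4; nlia. Qed.

Lemma arithF a z b : a <= 3 -> z <= 0 -> 2 * a + z <= 3 * 2 + b.
Proof. move=> h1 h2; nlia. Qed.

Lemma arithN a z b : a <= 1 -> z <= 0 -> 2 <= b -> 2 * a + z <= 3 * 0 + b.
Proof. move=> h1 h2 h3; nlia. Qed.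
Lemma arithR1 a z b : a <= 2 -> z <= 0 -> 1 <= b -> 2 * a + z <= 3 * 1 + b.
Proof. move=> h1 h2 h3; nlia. Qed.
Lemma arithA a z b : a <= 1 -> z <= 1 -> 1 <= b -> 2 * a + z <= 3 * 1 + b.
Proof. move=> h1 h2 h3; nlia. Qed.
Lemma arithC0 a z b : a <= 1 -> z <= 1 -> 2 * a + z <= 3 * 1 + b.
Proof. move=> h1 h2; nlia. Qed.
Lemma arithC a z b : a <= 2 -> z <= 2 -> 2 * a + z <= 3 * 2 + b.
Proof. move=> h1 h2; nlia. Qed.

Section Step.
Variables (R : {set {set T}}) (n : nat).
Hypothesis mR : mat R.
Hypothesis IH : forall P Q, #|P| < n -> two P -> two Q -> mat P -> mat Q ->
  [disjoint P & Q] -> goal P Q R.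
Variables P Q : {set {set T}}.
Hypotheses (Pn : #|P| <= n) (tP : two P) (tQ : two Q) (mP : mat P) (mQ : mat Q)
  (dPQ : [disjoint P & Q]).

Lemma PQF e : e \in P -> e \in Q -> False.
Proof. by move=> eP eQ; move: (disjointFr dPQ eP); rewrite eQ. Qed.

Lemma stepL S X p : p \in P -> ~~ [disjoint p & X] -> S \subset (P :|: Q) :\: R ->
  mat S -> cover S \subset X ->
  2 * #|P :&: meet X| + #|Zs P Q X| <= 3 * #|S| + #|(cover P :\: cover Q) :&: X| ->
  goal P Q R.
Proof.
move=> pP pX sS mS cSX ineq.
have sP' : P :\: meet X \subset P := subsetDl _ _.
have sQ' : Q :\: meet X \subset Q := subsetDl _ _.
have ltP : #|P :\: meet X| < n.
  apply: leq_trans Pn; apply: proper_card; rewrite properE sP' /=.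
  by apply/subsetPn; exists p => //; rewrite !inE pX.
have dPQ' : [disjoint P :\: meet X & Q :\: meet X] by apply: disjointW dPQ.
have [N' [mN' sN' hN']] := IH ltP (two_sub sP' tP) (two_sub sQ' tQ)
   (mat_sub sP' mP) (mat_sub sQ' mQ) dPQ'.
have dN : forall e, e \in N' -> [disjoint e & X].
  move=> e eN; move/subsetP: sN' => /(_ e eN); rewrite !inE.
  by case/andP => _ /orP[] /andP[] /negbNE.
have SX : forall e x, e \in S -> x \in e -> x \in X.
  move=> e x eS xe; apply: (subsetP cSX); apply/coverP'; by exists e.
exists (N' :|: S); split.
- move=> e f x; rewrite !inE => /orP[eN|eS] /orP[fN|fS] xe xf.
  + exact: mN' xe xf.
  + by case: (disjF (dN _ eN) xe (SX _ _ fS xf)).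
  + by case: (disjF (dN _ fN) xf (SX _ _ eS xe)).
  + exact: mS xe xf.
- apply/subsetP => e; rewrite inE => /orP[eN|eS]; last exact: (subsetP sS).
  move/subsetP: sN' => /(_ e eN); rewrite !inE.
  by case/andP => -> /orP[] /andP[] _ ->; rewrite ?orbT.
- have I0 : N' :&: S = set0.
    apply/eqP; rewrite -subset0; apply/subsetP => e; rewrite inE => /andP[eN eS].
    have eE : e \in P :|: Q by move/subsetP: sS => /(_ e eS); rewrite inE => /andP[].
    have e2 : #|e| = 2 by move: eE; rewrite inE => /orP[/tP|/tQ].
    have : 0 < #|e| by rewrite e2.
    case/card_gt0P => x xe.
    by case: (disjF (dN _ eN) xe (SX _ _ eS xe)).
  have hc := cardsU N' S; rewrite I0 cards0 subn0 in hc.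
  have h1 := cardsID (meet X) P.
  have h2 := dbound P Q X.
  rewrite hc; exact: (arith1 hN' h1 h2 ineq).
Qed.

Lemma Peq e p w : e \in P -> p \in P -> w \in e -> w \in p -> e = p.
Proof. by move=> eP pP we wp; exact: (mP eP pP we wp). Qed.

Lemma Qeq e p w : e \in Q -> p \in Q -> w \in e -> w \in p -> e = p.
Proof. by move=> eP pP we wp; exact: (mQ eP pP we wp). Qed.

Lemma caseF u v u' v' : [set u; v] \in P -> u != v ->
  [set u; u'] \in Q -> [set v; v'] \in Q -> [set u; u'] \notin R -> [set v; v'] \notin R ->
  goal P Q R.
Proof.
move=> pP uv quQ qvQ quR qvR.
have quqv : [set u; u'] != [set v; v'].
  apply/negP => /eqP e.
  have : v \in [set u; u'] by rewrite e !inE eqxx.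
  rewrite !inE eq_sym (negbTE uv) /= => /eqP vu'.
  by apply: (PQF pP); rewrite vu'.
apply: (stepL (S := [set [set u; u']; [set v; v']]) (X := [set u; u'] :|: [set v; v']) pP).
- apply: (notdisj (x := u)); by rewrite !inE eqxx.
- apply/subsetP => e; rewrite !inE => /orP[]/eqP->; by rewrite ?quQ ?qvQ ?quR ?qvR ?orbT.
- apply: mat_sub mQ; by rewrite subUset !sub1set quQ qvQ.
- apply/bigcupsP => e; rewrite !inE => /orP[]/eqP->; [exact: subsetUl | exact: subsetUr].
have hS : #|[set [set u; u']; [set v; v']]| = 2 by rewrite cards2 quqv.
have sub : P :&: meet ([set u; u'] :|: [set v; v']) \subset Pat P u :|: Pat P u' :|: Pat P v'.
  apply/subsetP => e; rewrite in_setI => /andP[eP]; rewrite inE => /meetP [y ye].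
  rewrite !inE => /orP[/orP[]|/orP[]] /eqP yE; subst y; rewrite ?eP ?ye ?orbT //.
  by rewrite (Peq eP pP ye) ?pP ?inE ?eqxx ?orbT ?pP.
have hP : #|P :&: meet ([set u; u'] :|: [set v; v'])| <= 3.
  apply: leq_trans (subset_leq_card sub) _; apply: leq_trans (card3 _ _ _) _.
  by rewrite -[3]/(1+1+1) !leq_add // Pat_le1.
have hZ : #|Zs P Q ([set u; u'] :|: [set v; v'])| <= 0.
  rewrite leqn0 cards_eq0; apply/negPn/negP => /set0Pn [x /ZsP [xX _ [f [y [fQ xf yf yX]]]]].
  move: yX; rewrite in_setU => /orP[] yq.
    by rewrite (Qeq fQ quQ yf yq) in xf; move: xX; rewrite in_setU xf.
  by rewrite (Qeq fQ qvQ yf yq) in xf; move: xX; rewrite in_setU xf orbT.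
rewrite hS; exact: arithF hP hZ.
Qed.

Lemma inP2 u v : [set u; v] \in P -> (u \in cover P) * (v \in cover P).
Proof. by move=> pP; split; apply/coverP'; exists [set u; v]; rewrite // !inE eqxx ?orbT. Qed.

Lemma Pm_p u v : [set u; v] \in P -> P :&: meet [set u; v] \subset Pat P u.
Proof.
move=> pP; apply/subsetP => e; rewrite in_setI => /andP[eP]; rewrite inE => /meetP [y ye yp].
by rewrite (Peq eP pP ye yp) !inE pP eqxx.
Qed.

Lemma caseN u v : [set u; v] \in P -> u != v -> u \notin cover Q -> v \notin cover Q ->
  goal P Q R.
Proof.
move=> pP uv uQ vQ.
apply: (stepL (S := (set0 : {set {set T}})) (X := [set u; v]) pP).
- apply: (notdisj (x := u)); by rewrite !inE eqxx.
- exact: sub0set.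
- by move=> e f x; rewrite inE.
- by apply/bigcupsP => e; rewrite inE.
have hP : #|P :&: meet [set u; v]| <= 1.
  by apply: leq_trans (subset_leq_card (Pm_p pP)) (Pat_le1 u mP).
have hZ : #|Zs P Q [set u; v]| <= 0.
  rewrite leqn0 cards_eq0; apply/negPn/negP => /set0Pn [x /ZsP [xX _ [f [y [fQ xf yf yX]]]]].
  have yQ : y \in cover Q by apply/coverP'; exists f.
  by move: yX; rewrite !inE => /orP[]/eqP yE; subst y; rewrite yQ in uQ vQ.
have hA : 2 <= #|(cover P :\: cover Q) :&: [set u; v]|.
  have -> : (cover P :\: cover Q) :&: [set u; v] = [set u; v].
    apply/setIidPr/subsetP => y; rewrite !inE => /orP[]/eqP->;
    by rewrite ?uQ ?vQ (inP2 pP).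
  by rewrite cards2 uv.
rewrite cards0; exact: arithN hP hZ hA.
Qed.

Lemma caseR1 u v u' : [set u; v] \in P -> u != v -> [set u; v] \in R ->
  [set u; u'] \in Q -> v \notin cover Q -> goal P Q R.
Proof.
move=> pP uv pR quQ vQ.
have quR : [set u; u'] \notin R.
  apply/negP => quR; apply: (PQF pP); by rewrite -(mR quR pR (x := u)) ?quQ // !inE eqxx.
apply: (stepL (S := [set [set u; u']]) (X := [set u; u'] :|: [set u; v]) pP).
- apply: (notdisj (x := u)); by rewrite !inE eqxx.
- by rewrite sub1set !inE quR quQ orbT.
- by apply: mat_sub mQ; rewrite sub1set.
- by apply/bigcupsP => e; rewrite inE => /eqP->; exact: subsetUl.
have hP : #|P :&: meet ([set u; u'] :|: [set u; v])| <= 2.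
  have sub : P :&: meet ([set u; u'] :|: [set u; v]) \subset Pat P u :|: Pat P u'.
    apply/subsetP => e; rewrite in_setI => /andP[eP]; rewrite inE => /meetP [y ye].
    rewrite in_setU => /orP[] yX.
      by move: yX; rewrite !inE => /orP[]/eqP yE; subst y; rewrite eP ye ?orbT.
    by rewrite (Peq eP pP ye yX) !inE pP eqxx.
  apply: leq_trans (subset_leq_card sub) _; apply: leq_trans (leq_card_setU _ _).1 _.
  by rewrite -[2]/(1+1) leq_add // Pat_le1.
have hZ : #|Zs P Q ([set u; u'] :|: [set u; v])| <= 0.
  rewrite leqn0 cards_eq0; apply/negPn/negP => /set0Pn [x /ZsP [xX _ [f [y [fQ xf yf yX]]]]].
  have yQ : y \in cover Q by apply/coverP'; exists f.
  move: yX; rewrite in_setU => /orP[] yX.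
    by rewrite (Qeq fQ quQ yf yX) in xf; move: xX; rewrite in_setU xf.
  move: yX; rewrite !inE => /orP[]/eqP yE; subst y; last by rewrite yQ in vQ.
  have uq : u \in [set u; u'] by rewrite !inE eqxx.
  by rewrite (Qeq fQ quQ yf uq) in xf; move: xX; rewrite in_setU xf.
have hA : 1 <= #|(cover P :\: cover Q) :&: ([set u; u'] :|: [set u; v])|.
  apply/card_gt0P; exists v; by rewrite !inE vQ (inP2 pP) eqxx !orbT.
rewrite cards1; exact: arithR1 hP hZ hA.
Qed.

Lemma caseA u v : [set u; v] \in P -> u != v -> [set u; v] \notin R ->
  u \notin cover Q -> goal P Q R.
Proof.
move=> pP uv pR uQ.
apply: (stepL (S := [set [set u; v]]) (X := [set u; v]) pP).
- apply: (notdisj (x := u)); by rewrite !inE eqxx.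
- by rewrite sub1set !inE pR pP.
- by apply: mat_sub mP; rewrite sub1set.
- by apply/bigcupsP => e; rewrite inE => /eqP->.
have hP : #|P :&: meet [set u; v]| <= 1.
  by apply: leq_trans (subset_leq_card (Pm_p pP)) (Pat_le1 u mP).
have hZ : #|Zs P Q [set u; v]| <= 1.
  apply: leq_trans (QP_le1 v tQ mQ); apply: subset_leq_card; apply/subsetP => x.
  move/ZsP => [xX _ [f [y [fQ xf yf yX]]]].
  have yQ : y \in cover Q by apply/coverP'; exists f.
  move: yX; rewrite in_set2 => /orP[]/eqP yE; subst y; first by rewrite yQ in uQ.
  apply: QPI fQ xf yf _; apply/negP => /eqP xv; subst x; by rewrite !inE eqxx orbT in xX.
have hA : 1 <= #|(cover P :\: cover Q) :&: [set u; v]|.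
  apply/card_gt0P; exists u; by rewrite !inE uQ (inP2 pP) eqxx.
rewrite cards1; exact: arithA hP hZ hA.
Qed.

Lemma caseC0 u v u' : [set u; v] \in P -> u != v -> [set u; v] \notin R ->
  [set u; u'] \in Q -> u' \notin cover P -> goal P Q R.
Proof.
move=> pP uv pR quQ u'P.
apply: (stepL (S := [set [set u; v]]) (X := [set u; v]) pP).
- apply: (notdisj (x := u)); by rewrite !inE eqxx.
- by rewrite sub1set !inE pR pP.
- by apply: mat_sub mP; rewrite sub1set.
- by apply/bigcupsP => e; rewrite inE => /eqP->.
have hP : #|P :&: meet [set u; v]| <= 1.
  by apply: leq_trans (subset_leq_card (Pm_p pP)) (Pat_le1 u mP).
have hZ : #|Zs P Q [set u; v]| <= 1.
  apply: leq_trans (QP_le1 v tQ mQ); apply: subset_leq_card; apply/subsetP => x.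
  move/ZsP => [xX xP [f [y [fQ xf yf yX]]]].
  move: yX; rewrite in_set2 => /orP[]/eqP yE; subst y.
    have uq : u \in [set u; u'] by rewrite !inE eqxx.
    rewrite (Qeq fQ quQ yf uq) !inE in xf; move: xf => /orP[]/eqP xE; subst x.
      by rewrite !inE eqxx in xX.
    by rewrite xP in u'P.
  apply: QPI fQ xf yf _; apply/negP => /eqP xv; subst x; by rewrite !inE eqxx orbT in xX.
rewrite cards1; exact: arithC0 hP hZ.
Qed.

Lemma caseC u v u' u'' : [set u; v] \in P -> u != v -> [set u; v] \notin R ->
  [set u; u'] \in Q -> u' != u -> [set u; u'] \in R -> [set u'; u''] \in P -> goal P Q R.
Proof.
move=> pP uv pR quQ u'u quR eP.
have eR : [set u'; u''] \notin R.
  apply/negP => eR; apply: (PQF eP); by rewrite (mR eR quR (x := u')) ?quQ // !inE eqxx ?orbT.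
have pe : [set u; v] != [set u'; u''].
  apply/negP => /eqP pe; have : u' \in [set u; v] by rewrite pe !inE eqxx.
  rewrite !inE (negbTE u'u) /= => /eqP u'v; apply: (PQF pP); by rewrite -u'v.
apply: (stepL (S := [set [set u; v]; [set u'; u'']]) (X := [set u; v] :|: [set u'; u'']) pP).
- apply: (notdisj (x := u)); by rewrite !inE eqxx.
- by rewrite subUset !sub1set !inE pR pP eR eP.
- by apply: mat_sub mP; rewrite subUset !sub1set pP eP.
- apply/bigcupsP => e; rewrite !inE => /orP[]/eqP->; [exact: subsetUl | exact: subsetUr].
have hS : #|[set [set u; v]; [set u'; u'']]| = 2 by rewrite cards2 pe.
have hP : #|P :&: meet ([set u; v] :|: [set u'; u''])| <= 2.
  have sub : P :&: meet ([set u; v] :|: [set u'; u'']) \subset Pat P u :|: Pat P u'.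
    apply/subsetP => e; rewrite in_setI => /andP[e1P]; rewrite inE => /meetP [y ye].
    rewrite in_setU => /orP[] yX.
      by rewrite (Peq e1P pP ye yX) !inE pP eqxx.
    by rewrite (Peq e1P eP ye yX) !inE eP eqxx orbT.
  apply: leq_trans (subset_leq_card sub) _; apply: leq_trans (leq_card_setU _ _).1 _.
  by rewrite -[2]/(1+1) leq_add // Pat_le1.
have hZ : #|Zs P Q ([set u; v] :|: [set u'; u''])| <= 2.
  have sub : Zs P Q ([set u; v] :|: [set u'; u'']) \subset QP Q v :|: QP Q u''.
    apply/subsetP => x; move/ZsP => [xX xP [f [y [fQ xf yf yX]]]].
    have xy : x != y by apply/negP => /eqP xy; subst x; rewrite yX in xX.
    have uq : u \in [set u; u'] by rewrite !inE eqxx.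
    have u'q : u' \in [set u; u'] by rewrite !inE eqxx orbT.
    have qX : x \in [set u; u'] -> False.
      by rewrite !inE => /orP[]/eqP xE; subst x; rewrite !inE eqxx ?orbT in xX.
    move: yX; rewrite in_setU !in_set2 => /orP[]/orP[]/eqP yE; subst y.
    + by case: qX; rewrite -(Qeq fQ quQ yf uq).
    + by rewrite in_setU (QPI fQ xf yf xy).
    + by case: qX; rewrite -(Qeq fQ quQ yf u'q).
    + by rewrite in_setU (QPI fQ xf yf xy) orbT.
  apply: leq_trans (subset_leq_card sub) _; apply: leq_trans (leq_card_setU _ _).1 _.
  by rewrite -[2]/(1+1) leq_add // QP_le1.
rewrite hS; exact: arithC hP hZ.
Qed.

Lemma caseCC u v u' : [set u; v] \in P -> u != v -> [set u; v] \notin R ->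
  [set u; u'] \in Q -> u' != u -> [set u; u'] \in R -> goal P Q R.
Proof.
move=> pP uv pR quQ u'u quR.
case: (boolP (u' \in cover P)) => [/coverP' [e eP u'e] | u'P]; last exact: caseC0 pP uv pR quQ u'P.
have [u'' [_ eE]] := two_pair (tP eP) u'e; subst e.
exact: caseC pP uv pR quQ u'u quR eP.
Qed.

Lemma dispatch p : p \in P -> goal P Q R.
Proof.
move=> pP; move: (tP pP) => /eqP/cards2P [u [v [uv pE]]]; subst p.
have pP' : [set v; u] \in P by rewrite setUC.
have vu : v != u by rewrite eq_sym.
have Rswap : ([set v; u] \in R) = ([set u; v] \in R) by rewrite setUC.
case: (boolP (u \in cover Q)) => [/coverP' [qu quQ uqu] | uQ];
  case: (boolP (v \in cover Q)) => [/coverP' [qv qvQ vqv]|vQ].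
- have [u' [u'u quE]] := two_pair (tQ quQ) uqu; subst qu.
  have [v' [v'v qvE]] := two_pair (tQ qvQ) vqv; subst qv.
  have pR : forall w w', [set w; w'] \in Q -> w \in [set u; v] -> [set w; w'] \in R ->
      [set u; v] \notin R.
    move=> w w' qQ wp qR; apply/negP => pR; apply: (PQF pP).
    by rewrite -(mR qR pR (x := w)) // !inE eqxx.
  have up : u \in [set u; v] by rewrite !inE eqxx.
  have vp : v \in [set u; v] by rewrite !inE eqxx orbT.
  case: (boolP ([set u; u'] \in R)) => quR.
    exact: caseCC pP uv (pR _ _ quQ up quR) quQ u'u quR.
  case: (boolP ([set v; v'] \in R)) => qvR.
    have pR' := pR _ _ qvQ vp qvR; rewrite -Rswap in pR'.
    exact: caseCC pP' vu pR' qvQ v'v qvR.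
  exact: caseF pP uv quQ qvQ quR qvR.
- have [u' [u'u quE]] := two_pair (tQ quQ) uqu; subst qu.
  case: (boolP ([set u; v] \in R)) => pR; first exact: caseR1 pP uv pR quQ vQ.
  rewrite -Rswap in pR; exact: caseA pP' vu pR vQ.
- have [v' [v'v qvE]] := two_pair (tQ qvQ) vqv; subst qv.
  case: (boolP ([set u; v] \in R)) => pR; last exact: caseA pP uv pR uQ.
  rewrite -Rswap in pR; exact: caseR1 pP' vu pR qvQ uQ.
- exact: caseN pP uv uQ vQ.
Qed.

End Step.

Lemma key n R P Q : mat R -> #|P| <= n -> two P -> two Q -> mat P -> mat Q ->
  [disjoint P & Q] -> goal P Q R.
Proof.
elim: n P Q => [|n IHn] P Q mR Pn tP tQ mP mQ dPQ.
  exists set0; split.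
  - by move=> e f x; rewrite inE.
  - exact: sub0set.
  - by move: Pn; rewrite leqn0 => /eqP->.
case: (set_0Vmem P) => [P0 | [p pP]].
  exists set0; split.
  - by move=> e f x; rewrite inE.
  - exact: sub0set.
  - by rewrite P0 cards0.
apply: (dispatch mR (n := n.+1)) pP => // P' Q' lt; exact: IHn.
Qed.


End Key.

Section Main.
Variable T : finType.
Implicit Types (E M F : {set {set T}}).

Lemma ism_mat E M : is_matching E M -> mat M /\ M \subset E.
Proof.
move/andP=> [sME /forallP h]; split => // e f x eM fM xe xf.
apply/eqP; apply/negPn/negP => ef.
move: (h e); rewrite eM /= => /forallP /(_ f); rewrite fM ef /= => d.
exact: (disjF d xe xf).
Qed.

Lemma mat_disj M e f : mat M -> e \in M -> f \in M -> e != f -> [disjoint e & f].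
Proof.
move=> mM eM fM ef; rewrite -setI_eq0; apply/eqP/setP => x; rewrite !inE.
apply/negP => /andP[xe xf]; move: ef; by rewrite (mM _ _ _ eM fM xe xf) eqxx.
Qed.

Lemma mat_ism E M : M \subset E -> mat M -> is_matching E M.
Proof.
move=> sME mM; rewrite /is_matching sME /=.
apply/forallP => e; apply/implyP => eM; apply/forallP => f; apply/implyP => fM.
apply/implyP => ef; exact: (mat_disj mM eM fM ef).
Qed.

Lemma cover_card M : two M -> mat M -> #|cover M| = 2 * #|M|.
Proof.
move=> tM mM.
have tr : trivIset M by apply/trivIsetP => A B AM BM AB; exact: (mat_disj mM AM BM AB).
rewrite -(eqP tr) (eq_bigr (fun _ => 2)); last by move=> i iM; rewrite tM.
by rewrite sum_nat_const mulnC.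
Qed.

Lemma nu_ge E M : is_matching E M -> #|M| <= nu E.
Proof. move=> h; rewrite /nu; exact: (@leq_bigmax_cond _ (is_matching E) (fun M => #|M|) M h). Qed.

Lemma nu_mono E F : nu (E :\: F) <= nu E.
Proof.
apply/bigmax_leqP => M /ism_mat [mM sM]; apply: nu_ge; apply: mat_ism mM.
by apply: subset_trans sM (subsetDl _ _).
Qed.

Variable E : {set {set T}}.
Hypothesis tE : two E.
Hypothesis pm : has_perfect_matching E.

Lemma max_perfect F : is_max_matching E F -> cover F = setT.
Proof.
case/andP => mF /eqP hF; have [mF' sF] := ism_mat mF.
case: pm => M0 [hM0 cM0]; have [mM0 sM0] := ism_mat hM0.
have h0 := nu_ge hM0.
have c0 := cover_card (two_sub sM0 tE) mM0.
have c1 := cover_card (two_sub sF tE) mF'.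
apply/eqP; rewrite eqEcard subsetT /= -cM0 c0 c1 hF.
by rewrite leq_mul2l.
Qed.

Lemma core F1 F2 M2 : is_max_matching E F1 -> is_max_matching E F2 ->
  is_matching (E :\: F2) M2 -> 2 * #|M2| <= 3 * nu (E :\: F1).
Proof.
move=> h1 h2 hM.
have [mF1 sF1] := ism_mat (proj1 (andP h1)).
have [mF2 sF2] := ism_mat (proj1 (andP h2)).
have [mM sM] := ism_mat hM.
have sME : M2 \subset E := subset_trans sM (subsetDl _ _).
have dMF : [disjoint M2 & F2].
  rewrite disjoints_subset; apply/subsetP => e eM.
  by move/subsetP: sM => /(_ e eM); rewrite !inE => /andP[].
have [N [mN sN hN]] := key (n := #|M2|) mF1 (leqnn _) (two_sub sME tE) (two_sub sF2 tE) mM mF2 dMF.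
have d0 : dd M2 F2 = 0 by rewrite /dd (max_perfect h2) setDT cards0.
have hNE : #|N| <= nu (E :\: F1).
  apply: nu_ge; apply: mat_ism mN; apply/subsetP => e eN.
  move/subsetP: sN => /(_ e eN); rewrite !inE => /andP[-> /orP[]] eE //=.
    by move/subsetP: sME => /(_ e eE).
  by move/subsetP: sF2 => /(_ e eE).
rewrite d0 addn0 in hN; apply: leq_trans hN _; by rewrite leq_mul2l hNE orbT.
Qed.

Lemma Lmax_bound F1 : is_max_matching E F1 -> 2 * Lmax E <= 3 * nu (E :\: F1).
Proof.
move=> h1; rewrite /Lmax.
apply: (big_ind (fun x => 2 * x <= 3 * nu (E :\: F1))) => //.
  by move=> x y hx hy; case: (leqP x y).
move=> F2 h2; rewrite /nu.
apply: (big_ind (fun x => 2 * x <= 3 * nu (E :\: F1))) => //.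
  by move=> x y hx hy; case: (leqP x y).
move=> M2 hM; exact: core h1 h2 hM.
Qed.

End Main.

Lemma arithL a b : a <= b -> 2 * a <= 3 * b.
Proof. move=> h; nlia. Qed.

Theorem theorem2 (T : finType) (E : {set {set T}}) :
  simple_graph E -> has_perfect_matching E -> 2 * Lmax E <= 3 * lmin E.
Proof.
move=> /forallP sg pm.
have tE : two E by move=> e eE; apply/eqP; exact: (implyP (sg e) eE).
rewrite /lmin.
apply: (big_ind (fun y => 2 * Lmax E <= 3 * y)).
- apply: arithL; apply/bigmax_leqP => F _; exact: nu_mono.
- by move=> x y hx hy; case: (leqP x y).
- move=> F1 h1; exact: (Lmax_bound tE pm h1).
Qed.
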